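(* There are no fixed points in $\mathcal{M}_k$ under the action of a phase $P(\omega)$, where $\omega\in(-\pi,\pi)\setminus\{0\}$.
   Context: Monad matrices are $(A,B,C,D)$ with $A,B\in Mat_{k\times k}(\mathbb{C})$, $C\in Mat_{k\times 2}(\mathbb{C})$, $D\in Mat_{2\times k}(\mathbb{C})$, satisfying $[A,B]+CD=0$ and the full-rank conditions that $\begin{pmatrix}A-y\mathbb{1}_k\\ B-x\mathbb{1}_k\\ D\end{pmatrix}$ is injective and $\begin{pmatrix}x\mathbb{1}_k-B & A-y\mathbb{1}_k & C\end{pmatrix}$ is surjective for all $x,y\in\mathbb{C}$. $\mathcal{M}_k$ is the moduli space of non-singular monad matrices (those with $A\in GL(k,\mathbb{C})$) modulo $(A,B,C,D)\sim(gAg^{-1},gBg^{-1},gC,Dg^{-1})$, $g\in GL(k,\mathbb{C})$; it is identified with the moduli space of $(k,k)$-calorons. The phase $P(\omega)$ acts by $(A,B,C,D)\mapsto(A,B,Cq_\omega^{-1},q_\omega D)$ with $q_\omega=\mathrm{diag}(e^{-\imath\omega},e^{\imath\omega})$. *)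

(* Defs.v *)
From HB Require Import structures.
From mathcomp Require Import all_boot all_order all_algebra.
From mathcomp Require Import reals trigo.
From mathcomp.real_closed Require Import complex.
Set Implicit Arguments. Unset Strict Implicit. Unset Printing Implicit Defensive.
Import Order.TTheory GRing.Theory Num.Theory.
Local Open Scope ring_scope.
Local Open Scope complex_scope.

Section Monad.
Variable R : realType.
Notation C := (R[i]).

Definition expi (w : R) : C := (cos w +i* sin w).

Definition qmat (w : R) : 'M[C]_2 := diag_mx (\row_(j < 2) if j == 0 then expi (- w) else expi w).

Record monad (k : nat) := Monad {
  mA : 'M[C]_k; mB : 'M[C]_k; mC : 'M[C]_(k, 2); mD : 'M[C]_(2, k) }.

Definition monad_eq k (M : monad k) : Prop :=
  mA M *m mB M - mB M *m mA M + mC M *m mD M = 0.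

Definition monad_injective k (M : monad k) : Prop :=
  forall x y : C, forall v : 'cV[C]_k,
    col_mx (mA M - y%:M) (col_mx (mB M - x%:M) (mD M)) *m v = 0 -> v = 0.

Definition monad_surjective k (M : monad k) : Prop :=
  forall x y : C, forall w : 'cV[C]_k, exists u : 'cV[C]_(k + (k + 2)),
    row_mx (x%:M - mB M) (row_mx (mA M - y%:M) (mC M)) *m u = w.

Definition monad_matrices k (M : monad k) : Prop :=
  [/\ monad_eq M, monad_injective M & monad_surjective M].

Definition nonsingular_monad k (M : monad k) : Prop :=
  monad_matrices M /\ mA M \in unitmx.

Definition monad_equiv k (M N : monad k) : Prop :=
  exists g : 'M[C]_k, [/\ g \in unitmx,
    mA N = g *m mA M *m invmx g, mB N = g *m mB M *m invmx g,
    mC N = g *m mC M & mD N = mD M *m invmx g].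

Definition phase k (w : R) (M : monad k) : monad k :=
  Monad (mA M) (mB M) (mC M *m invmx (qmat w)) (qmat w *m mD M).

End Monad.

(* Main.v *)
Require Import Defs.
From HB Require Import structures.
From mathcomp Require Import all_boot all_order all_algebra.
From mathcomp Require Import reals trigo.
From mathcomp.real_closed Require Import complex.
From mathcomp Require Import lra.
Import Order.TTheory GRing.Theory Num.Theory.
Local Open Scope ring_scope.
Lemma eig_in_sub (F : closedFieldType) k (S M : 'M[F]_k) :
  S != 0 -> (S *m M <= S)%MS ->
  exists v : 'rV_k, [/\ v != 0, (v <= S)%MS & exists mu, v *m M = mu *: v].
Proof.
move=> S0 SM.
set r := \rank S.
have rpos : (0 < r)%N by rewrite lt0n mxrank_eq0.
have Sb : (row_base S *m M <= row_base S)%MS.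
  rewrite eq_row_base; apply: submx_trans SM; apply: submxMr.
  by rewrite eq_row_base.
set X := row_base S *m M *m pinvmx (row_base S).
have XS : X *m row_base S = row_base S *m M by rewrite /X mulmxKpV.

have : size (char_poly X) != 1%N by rewrite size_char_poly eqSS -lt0n.
case/closed_rootP => mu.
rewrite -eigenvalue_root_char => /eigenvalueP [x xX x0].
exists (x *m row_base S); split.
- by rewrite mulmx_free_eq0 ?row_base_free.
- by apply: submx_trans (submxMl _ _) _; rewrite eq_row_base.
- by exists mu; rewrite -mulmxA -XS mulmxA xX scalemxAl.
Qed.

Lemma comm_eig (F : closedFieldType) k (A B : 'M[F]_k) (p : 'cV_k) (c : 'rV_k) :
  c != 0 ->
  forall n (S : 'M_k), (\rank S <= n)%N -> (c <= S)%MS -> (S *m A <= S)%MS ->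
  (S *m B <= S)%MS ->
  (forall m (X : 'M_(m,k)), (X <= S)%MS -> X *m (A *m B - B *m A) = (X *m p) *m c) ->
  exists v : 'rV_k, [/\ v != 0, (v <= S)%MS, v *m p = 0 &
     exists mu nu, v *m A = mu *: v /\ v *m B = nu *: v].
Proof.
move=> c0; elim=> [|n IH] S rS cS SA SB HK.
  move: rS; rewrite leqn0 mxrank_eq0 => /eqP S0.
  by move: cS; rewrite S0 submx0 (negPf c0).
have S0 : S != 0 by apply: contraNneq c0 => S0; move: cS; rewrite S0 submx0.
have [v0 [v00 v0S [mu v0A]]] := @eig_in_sub _ _ _ _ S0 SA.
set Amu := A - mu%:M.
set E := (S :&: kermx Amu)%MS.
have ES : (E <= S)%MS := capmxSl _ _.
have kerA : forall m (X : 'M_(m,k)), (X <= E)%MS -> X *m A = mu *: X.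
  move=> m X XE.
  have : X *m Amu = 0 by apply/sub_kermxP; apply: submx_trans XE (capmxSr _ _).
  by rewrite /Amu mulmxBr mul_mx_scalar => /eqP; rewrite subr_eq0 => /eqP.
have v0E : (v0 <= E)%MS.
  rewrite sub_capmx v0S; apply/sub_kermxP.
  by rewrite /Amu mulmxBr mul_mx_scalar v0A subrr.
have E0 : E != 0 by apply: contraNneq v00 => E0; move: v0E; rewrite E0 submx0.
have key : forall m (X : 'M_(m,k)), (X <= E)%MS -> X *m B *m Amu = - ((X *m p) *m c).
  move=> m X XE.
  rewrite -(HK _ _ (submx_trans XE ES)) /Amu !mulmxBr !mulmxA (kerA _ _ XE).
  by rewrite mul_mx_scalar -scalemxAl opprB.
case: (eqVneq (E *m p) 0) => Ep.
  have EB : (E *m B <= E)%MS.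
    rewrite sub_capmx; apply/andP; split; first exact: submx_trans (submxMr _ ES) SB.
    by apply/sub_kermxP; rewrite key // Ep mul0mx oppr0.
  have [v [vn0 vE [nu vB]]] := @eig_in_sub _ _ _ _ E0 EB.
  exists v; split => //; first exact: submx_trans vE ES.
    by case/submxP: vE => w ->; rewrite -mulmxA Ep mulmx0.
  by exists mu, nu; split => //; apply: kerA.
have [a Ea] : exists a, (E *m p) a 0 != 0.
  case: (pickP (fun a => (E *m p) a 0 != 0)) => [a Ha|H]; first by exists a.
  case/eqP: Ep; apply/matrixP => i j; rewrite (ord1 j).
  by have := H i; move/negbFE/eqP => ->; rewrite mxE.
set e := row a E.
have eE : (e <= E)%MS := row_sub a E.
have ep : e *m p = ((E *m p) a 0)%:M.
  by rewrite {1}(mx11_scalar (e *m p)) /e -row_mul mxE.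
have cS' : (c <= S *m Amu)%MS.
  have := key _ _ eE; rewrite ep mul_scalar_mx => h.
  have -> : c = ((E *m p) a 0)^-1 *: - (e *m B *m Amu).
    by rewrite h opprK scalerA mulVf // scale1r.
  apply: scalemx_sub; rewrite eqmx_opp; apply: submxMr.
  exact: submx_trans (submxMr _ (submx_trans eE ES)) SB.
have S'S : (S *m Amu <= S)%MS.
  rewrite /Amu mulmxBr mul_mx_scalar addmx_sub // eqmx_opp scalemx_sub //.
have [v [vn0 vS vp vAB]] : exists v : 'rV_k, [/\ v != 0, (v <= S *m Amu)%MS, v *m p = 0 &
     exists mu nu, v *m A = mu *: v /\ v *m B = nu *: v].
  apply: IH => //.
  - rewrite -ltnS (leq_trans _ rS) // -(mxrank_mul_ker S Amu) -addn1 leq_add2l.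
    by rewrite lt0n mxrank_eq0 -/E.
  - have -> : S *m Amu *m A = S *m A *m Amu.
      by rewrite -!mulmxA /Amu; congr (_ *m _); rewrite mulmxBl mulmxBr mul_mx_scalar mul_scalar_mx.
    exact: submxMr.
  - have -> : S *m Amu *m B = S *m (A *m B - B *m A) + S *m B *m Amu.
      rewrite /Amu !mulmxBr !mulmxBl !mulmxA mul_mx_scalar -!scalemxAl.
      by rewrite mul_mx_scalar addrA subrK.
    rewrite HK // addmx_sub //; first exact: submx_trans (submxMl _ _) cS'.
    exact: submxMr.
  - by move=> m X XS'; apply: HK; apply: submx_trans XS' S'S.
by exists v; split => //; apply: submx_trans vS S'S.
Qed.

Lemma col_mulmx (F : fieldType) m n p j (X : 'M[F]_(m,n)) (Y : 'M_(n,p)) :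
  col j (X *m Y) = X *m col j Y.
Proof. by rewrite !colE mulmxA. Qed.

Lemma row_diag_mul (F : fieldType) n m (d : 'rV[F]_n) (M : 'M_(n,m)) i :
  row i (diag_mx d *m M) = d 0 i *: row i M.
Proof. by apply/rowP => j; rewrite mul_diag_mx !mxE. Qed.

Lemma col_mul_diag (F : fieldType) n m (d : 'rV[F]_n) (M : 'M_(m,n)) j :
  col j (M *m diag_mx d) = d 0 j *: col j M.
Proof. by apply/colP => a; rewrite mul_mx_diag !mxE mulrC. Qed.

Lemma aux (F : closedFieldType) k (A B G : 'M[F]_k) (Ct : 'M_(2,k)) (Dt : 'M_(k,2))
  (d : 'rV_2) (i : 'I_2) :
  (forall r : 'I_2, r != i -> d 0 r != d 0 i) ->
  G *m A = A *m G -> G *m B = B *m G ->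
  Ct *m G = diag_mx d *m Ct -> G *m Dt = Dt *m diag_mx d ->
  A *m B - B *m A = Dt *m Ct -> row i Ct != 0 ->
  exists v : 'rV_k, [/\ v != 0, v *m Dt = 0 &
     exists mu nu, v *m A = mu *: v /\ v *m B = nu *: v].
Proof.
move=> dneq GA GB CG GD K ci.
set S := kermx (G - (d 0 i)%:M).
have XS : forall m (X : 'M_(m,k)), (X <= S)%MS -> X *m G = d 0 i *: X.
  move=> m X /sub_kermxP; rewrite mulmxBr mul_mx_scalar => /eqP.
  by rewrite subr_eq0 => /eqP.
have Xr : forall m (X : 'M_(m,k)) r, (X <= S)%MS -> r != i -> X *m col r Dt = 0.
  move=> m X r XS' ri.
  have h : X *m G *m col r Dt = d 0 r *: (X *m col r Dt).
    by rewrite -mulmxA -col_mulmx GD col_mul_diag scalemxAr.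
  move: h; rewrite (XS _ _ XS') -scalemxAl => /eqP.
  rewrite -subr_eq0 -scalerBl scaler_eq0 subr_eq0 eq_sym (negPf (dneq r ri)) /=.
  by move/eqP.
have inv : forall M, G *m M = M *m G -> (S *m M <= S)%MS.
  move=> M GM; apply/sub_kermxP; rewrite -mulmxA.
  have -> : M *m (G - (d 0 i)%:M) = (G - (d 0 i)%:M) *m M.
    by rewrite mulmxBr mulmxBl GM mul_mx_scalar mul_scalar_mx.
  by rewrite mulmxA mulmx_ker mul0mx.
have cS : (row i Ct <= S)%MS.
  by apply/sub_kermxP; rewrite mulmxBr -row_mul CG row_diag_mul mul_mx_scalar subrr.
have HK : forall m (X : 'M_(m,k)), (X <= S)%MS ->
    X *m (A *m B - B *m A) = (X *m col i Dt) *m row i Ct.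
  move=> m X XS'; rewrite K mulmxA; apply/matrixP => a b.
  have e : forall r, (X *m Dt) a r = (X *m col r Dt) a 0.
    by move=> r; rewrite -col_mulmx [RHS]mxE.
  rewrite [LHS]mxE [RHS]mxE big_ord1 (bigD1 i) //= big1 ?addr0.
    by rewrite e [row i Ct 0 b]mxE.
  by move=> r ri; rewrite e Xr // mxE mul0r.
have [v [v0 vS vp [mu [nu [vA vB]]]]] :=
  @comm_eig _ _ A B (col i Dt) (row i Ct) ci k S (rank_leq_col S) cS (inv A GA) (inv B GB) HK.
exists v; split => //; last by exists mu, nu.
apply/matrixP => a r.
have -> : (v *m Dt) a r = (v *m col r Dt) a 0 by rewrite -col_mulmx [RHS]mxE.
case: (eqVneq r i) => [->|ri]; first by rewrite vp !mxE.
by rewrite Xr // !mxE.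
Qed.

Lemma expi_neq0 (R : realType) (x : R) : expi x != 0.
Proof.
apply/eqP => h.
have hc : cos x = 0 by have := congr1 (@complex.Re R) h.
have hs : sin x = 0 by have := congr1 (@complex.Im R) h.
have := cos2Dsin2 x; rewrite hc hs expr0n /= addr0 => /eqP.
by rewrite eq_sym oner_eq0.
Qed.

Theorem mainTheorem3 (R : realType) (k : nat) (w : R) :
  (0 < k)%N -> - pi < w < pi -> w != 0 ->
  forall M : monad R k, nonsingular_monad M -> ~ monad_equiv (phase w M) M.
Proof.
move=> kpos /andP[wlo whi] w0 M [[Meq Minj Msurj] _] [g [gu hA hB hC hD]].
move: hA hB hC hD Meq Minj Msurj; rewrite /= /monad_eq /monad_injective /monad_surjective.
set A := mA M; set B := mB M; set C := mC M; set D := mD M.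
set dq : 'rV[R[i]]_2 := \row_(j < 2) if j == 0 then expi (- w) else expi w.
have qE : qmat w = diag_mx dq by [].
rewrite qE => hA hB hC hD Meq Minj Msurj.
have sw : sin w != 0.
  case: (ltgtP w 0) => [wn|wp|we]; last by rewrite we eqxx in w0.
    have : 0 < - w < pi by apply/andP; split; lra.
    by move/sin_gt0_pi; rewrite sinN oppr_gt0 => /ltr0_neq0.
  have : 0 < w < pi by apply/andP; split; lra.
  by move/sin_gt0_pi => /lt0r_neq0.
have dneq : dq 0 1 != dq 0 0.
  rewrite !mxE /=; apply/eqP => h.
  have := congr1 (@complex.Im R) h; rewrite /= sinN => h2.
  by move: sw; rewrite (_ : sin w = 0) ?eqxx //; lra.
have qu : diag_mx dq \in unitmx.
  by rewrite unitmxE det_diag unitfE !big_ord_recl big_ord0 mulr1 mulf_neq0 // !mxE /= expi_neq0.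
have gA : g *m A = A *m g by rewrite {2}hA mulmxKV.
have gB : g *m B = B *m g by rewrite {2}hB mulmxKV.
have CG : C *m diag_mx dq = g *m C.
  by rewrite {1}hC -mulmxA (mulmxKV qu).
have DG : D *m g = diag_mx dq *m D by rewrite {1}hD mulmxKV.
have CD : C *m D = B *m A - A *m B.
  by move/eqP: Meq; rewrite addrC addr_eq0 => /eqP ->; rewrite opprB.
have K : A^T *m B^T - B^T *m A^T = D^T *m C^T.
  by rewrite -!trmx_mul CD linearB.
have inj_contra : forall v : 'rV_k, v != 0 -> v *m D^T = 0 ->
    (exists mu nu, v *m A^T = mu *: v /\ v *m B^T = nu *: v) -> False.
  move=> v v0 vD [mu [nu [vA vB]]].
  have := Minj nu mu v^T.
  have -> : col_mx (A - mu%:M) (col_mx (B - nu%:M) D) *m v^T = 0.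
    apply: trmx_inj; rewrite trmx_mul trmxK !tr_col_mx !mul_mx_row !linearB /=.
    rewrite (@tr_scalar_mx _ _ mu) (@tr_scalar_mx _ _ nu) !mul_mx_scalar vA vB vD !subrr !row_mx0.
    by rewrite trmx0.
  move=> /(_ erefl) vt0; move/eqP: v0; apply.
  by apply: trmx_inj; rewrite vt0 trmx0.
have fin : forall i : 'I_2, row i C^T != 0 -> False.
  move=> i ci.
  have dn : forall r : 'I_2, r != i -> dq 0 r != dq 0 i.
    have e2 : forall j : 'I_2, j = 0 \/ j = 1.
      by case=> [[|[|//]] Hj]; [left|right]; apply/val_inj.
    move=> r ri.
    case: (e2 r) ri => -> ; case: (e2 i) => -> //; rewrite ?eqxx // => _.
    by rewrite eq_sym.
  have h1 : g^T *m A^T = A^T *m g^T by rewrite -!trmx_mul gA.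
  have h2 : g^T *m B^T = B^T *m g^T by rewrite -!trmx_mul gB.
  have h3 : C^T *m g^T = diag_mx dq *m C^T.
    by rewrite -trmx_mul -CG trmx_mul tr_diag_mx.
  have h4 : g^T *m D^T = D^T *m diag_mx dq.
    by rewrite -trmx_mul DG trmx_mul tr_diag_mx.
  have [v [v0 vD vAB]] := @aux _ k A^T B^T g^T C^T D^T dq i dn h1 h2 h3 h4 K ci.
  exact: inj_contra v v0 vD vAB.
case: (pickP (fun i => row i C^T != 0)) => [i hi|H]; first exact: fin i hi.
have C0 : C = 0.
  rewrite -[C]trmxK (_ : C^T = 0) ?trmx0 //.
  by apply/row_matrixP => i; rewrite row0; apply/eqP/negbFE/H.
have KAB : A *m B - B *m A = 0 by move: Meq; rewrite C0 mul0mx addr0.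
have c0 : const_mx 1 != 0 :> 'rV[R[i]]_k.
  apply/eqP => /matrixP /(_ 0 (Ordinal kpos)); rewrite !mxE => /eqP.
  by rewrite oner_eq0.
have HK0 : forall m (X : 'M_(m,k)), (X <= (1%:M : 'M[R[i]]_k))%MS ->
    X *m (A *m B - B *m A) = (X *m (0 : 'cV[R[i]]_k)) *m const_mx 1.
  by move=> m X XS; rewrite KAB !mulmx0 mul0mx.
have [u [u0 _ _ [mu [nu [uA uB]]]]] :=
  @comm_eig _ _ A B 0 (const_mx 1) c0 k 1%:M (rank_leq_col _) (submx1 _)
    (submx1 _) (submx1 _) HK0.
have [j uj] : exists j, u 0 j != 0.
  case: (pickP (fun j => u 0 j != 0)) => [j hj|H2]; first by exists j.
  case/eqP: u0; apply/rowP => j; rewrite mxE; exact/eqP/negbFE/H2.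
have [z hz] := Msurj nu mu (col j 1%:M).
have : u *m col j 1%:M = 0.
  rewrite -hz mulmxA !mul_mx_row !mulmxBr !mul_mx_scalar uA uB C0 mulmx0 !subrr.
  by rewrite !row_mx0 mul0mx.
rewrite -col_mulmx mulmx1 => /colP /(_ 0); rewrite !mxE => h.
by rewrite h eqxx in uj.
Qed.
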